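(* Let $\Sigma$ be a $p\times p$ positive definite correlation matrix ($\Sigma_{jj}=1$), let $\beta\in\mathbb{R}^p$, $\sigma>0$, $\nu\ge0$, $n\ge1$, $\mu_n=\sqrt{2\log p/n}$, and let $S=\{j:|\beta_j|>\sigma\nu\mu_n\}$, $k=|S|$, $S^c=\{1,\dots,p\}\setminus S$. Let $\bar k\ge1$ be an integer with $k\le\bar k$. Suppose $\gamma(\Sigma):=\max_{j\neq j'}|\Sigma_{jj'}|\le\omega_0/(2\bar k)$ for some $0\le\omega_0<1$, and $\|\beta_{S^c}\|_1\le\sigma\eta\mu_n$ for some $\eta\ge0$; put $\bar\eta=\eta/\bar k$. Then, if $1\le k\le\bar k$: (a) for every $T\subseteq\{1,\dots,p\}$ with $|T|=k$, $\lambda_{min}(\Sigma_{TT})\ge1-\omega_0/2$ and $\lambda_{max}(\Sigma_{TT})\le1+\omega_0/2$; (b) for every $T$ with $|T|=k$, $\max_{j\notin T}\|\Sigma_{TT}^{-1}\Sigma_{Tj}\|_1\le\omega_0$; (c) $\|\Sigma_{SS}^{-1}\Sigma_{SS^c}\beta_{S^c}\|_\infty\le\sigma\,\omega_0\bar\eta\,\mu_n$ and $\|\Sigma_{S^c|S}\beta_{S^c}\|_\infty\le\sigma(\nu+\omega_0\bar\eta)\mu_n$, where $\Sigma_{S^c|S}=\Sigma_{S^cS^c}-\Sigma_{S^cS}\Sigma_{SS}^{-1}\Sigma_{SS^c}$. If $k=0$, then $\|\Sigma\beta\|_\infty\le\sigma(\nu+\omega_0\bar\eta)\mu_n$.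
   Context: For index sets $A,A'$, $\Sigma_{AA'}$ is the submatrix with rows in $A$ and columns in $A'$, $\beta_A$ is the subvector indexed by $A$; $\lambda_{min}(\cdot),\lambda_{max}(\cdot)$ denote the smallest and largest eigenvalues of a symmetric matrix. *)

(* Defs.v *)
From HB Require Import structures.
From mathcomp Require Import all_boot all_order all_algebra.
From mathcomp Require Import reals exp.
Set Implicit Arguments. Unset Strict Implicit. Unset Printing Implicit Defensive.
Import Order.TTheory GRing.Theory Num.Theory.
Local Open Scope ring_scope.

Section Defs.
Variable R : realType.
Variable p : nat.

(* Sigma_{T U}: rows in T, columns in U (indices enumerated increasingly). *)
Definition subm (A : 'M[R]_p) (T U : {set 'I_p}) : 'M[R]_(#|T|, #|U|) :=
  \matrix_(i < #|T|, j < #|U|) A (enum_val i) (enum_val j).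

Definition subcol (A : 'M[R]_p) (T : {set 'I_p}) (j : 'I_p) : 'cV[R]_#|T| :=
  \col_(i < #|T|) A (enum_val i) j.

Definition subv (b : 'cV[R]_p) (T : {set 'I_p}) : 'cV[R]_#|T| :=
  \col_(i < #|T|) b (enum_val i) 0.

Definition posdef (A : 'M[R]_p) : Prop :=
  A^T = A /\ forall x : 'cV[R]_p, x != 0 -> 0 < (x^T *m A *m x) 0 0.

Definition gamma (A : 'M[R]_p) : R :=
  \big[Num.max/0]_(j : 'I_p) \big[Num.max/0]_(j' : 'I_p | j != j') `|A j j'|.
End Defs.

Definition norm1 (R : realType) (m : nat) (v : 'cV[R]_m) : R :=
  \sum_(i < m) `|v i 0|.

Definition norminf (R : realType) (m : nat) (v : 'cV[R]_m) : R :=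
  \big[Num.max/0]_(i < m) `|v i 0|.

Definition lambda_min_ge (R : realType) (m : nat) (A : 'M[R]_m) (c : R) : Prop :=
  forall a, eigenvalue A a -> c <= a.

Definition lambda_max_le (R : realType) (m : nat) (A : 'M[R]_m) (c : R) : Prop :=
  forall a, eigenvalue A a -> a <= c.

Definition mu_n (R : realType) (p n : nat) : R :=
  Num.sqrt (2 * ln (p%:R : R) / n%:R).

(* Main.v *)
Require Import Defs.
From HB Require Import structures.
From mathcomp Require Import all_boot all_order all_algebra.
From mathcomp Require Import reals exp.
From mathcomp Require Import ring lra.
Import Order.TTheory GRing.Theory Num.Theory.
Local Open Scope ring_scope.
Set Implicit Arguments. Unset Strict Implicit.

Section Gen.
Variable R : realType.

Lemma ninf_ge0 m (x : 'cV[R]_m) : 0 <= norminf x.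
Proof.
rewrite /norminf; elim/big_ind: _ => // a b ha hb.
by rewrite le_max ha.
Qed.

Lemma ninf_ge m (x : 'cV[R]_m) i : `|x i 0| <= norminf x.
Proof. exact: le_bigmax. Qed.

Lemma ninf_le m (x : 'cV[R]_m) M : 0 <= M -> (forall i, `|x i 0| <= M) ->
  norminf x <= M.
Proof. by move=> h0 h; apply/bigmax_leP; split. Qed.

Lemma n1_ge0 m (x : 'cV[R]_m) : 0 <= norm1 x.
Proof. by apply: sumr_ge0 => i _. Qed.

Lemma n1_le_inf m (x : 'cV[R]_m) : norm1 x <= m%:R * norminf x.
Proof.
apply: (@le_trans _ _ (\sum_(i < m) norminf x)).
  by apply: ler_sum => i _; exact: ninf_ge.
by rewrite sumr_const card_ord mulr_natl.
Qed.

Lemma L0 m n (B : 'M[R]_(m, n)) g (x : 'cV[R]_n) i :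
  (forall i j, `|B i j| <= g) -> `|(B *m x) i 0| <= g * norm1 x.
Proof.
move=> hB; rewrite mxE; apply: le_trans (ler_norm_sum _ _ _) _.
rewrite /norm1 mulr_sumr; apply: ler_sum => j _; rewrite normrM.
by apply: ler_wpM2r.
Qed.

Lemma L1 m n (B : 'M[R]_(m, n)) g (x : 'cV[R]_n) :
  (forall i j, `|B i j| <= g) -> norm1 (B *m x) <= m%:R * (g * norm1 x).
Proof.
move=> hB; apply: (@le_trans _ _ (\sum_(i < m) (g * norm1 x))).
  by apply: ler_sum => i _; exact: L0.
by rewrite sumr_const card_ord mulr_natl.
Qed.

Lemma n1_sub m (u v : 'cV[R]_m) : norm1 (u - v) <= norm1 u + norm1 v.
Proof.
rewrite /norm1 -big_split /=; apply: ler_sum => i _; rewrite !mxE.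
by rewrite ler_normB.
Qed.

Lemma Ax_split m (A : 'M[R]_m) (x : 'cV[R]_m) :
  x = A *m x - (A - 1%:M) *m x.
Proof. by rewrite mulmxBl mul1mx opprB addrC subrK. Qed.

Lemma mxB_entry m n (u v : 'M[R]_(m, n)) i j : (u - v) i j = u i j - v i j.
Proof. by rewrite !mxE. Qed.

Lemma LBinf m (A : 'M[R]_m) g (x : 'cV[R]_m) :
  0 <= g -> (forall i j, `|(A - 1%:M) i j| <= g) ->
  norminf x <= norminf (A *m x) + m%:R * g * norminf x.
Proof.
move=> g0 hB; apply: ninf_le.
  by apply: addr_ge0; rewrite ?ninf_ge0 // mulr_ge0 // ?ninf_ge0 // mulr_ge0.
move=> i; rewrite {1}(Ax_split A x) mxB_entry.
apply: le_trans (ler_normB _ _) _; apply: lerD; first exact: ninf_ge.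
apply: le_trans (L0 x i hB) _; rewrite -mulrA mulrCA; apply: ler_wpM2l => //.
exact: n1_le_inf.
Qed.

Lemma LB1 m (A : 'M[R]_m) g (x : 'cV[R]_m) :
  (forall i j, `|(A - 1%:M) i j| <= g) ->
  norm1 x <= norm1 (A *m x) + m%:R * g * norm1 x.
Proof.
move=> hB; rewrite {1}(Ax_split A x); apply: le_trans (n1_sub _ _) _.
by apply: lerD => //; rewrite -mulrA; apply: L1.
Qed.

Lemma trB m (A : 'M[R]_m) g :
  (forall i j, `|(A - 1%:M) i j| <= g) -> (forall i j, `|(A^T - 1%:M) i j| <= g).
Proof. by move=> h i j; have := h j i; rewrite !mxE eq_sym. Qed.

Lemma kerA m (A : 'M[R]_m) g (x : 'cV[R]_m) :
  0 <= g -> m%:R * g < 1 -> (forall i j, `|(A - 1%:M) i j| <= g) ->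
  A *m x = 0 -> x = 0.
Proof.
move=> g0 hmg hB hx; have := LBinf x g0 hB; rewrite hx.
have -> : norminf (0 : 'cV[R]_m) = 0.
  by apply/eqP; rewrite eq_le ninf_ge0 andbT; apply: ninf_le => // i; rewrite mxE normr0.
rewrite add0r => h.
have hN : norminf x <= 0.
  have := ninf_ge0 x; nra.
apply/matrixP => i j; rewrite (ord1 j) mxE; apply/eqP; rewrite -normr_le0.
exact: le_trans (ninf_ge x i) hN.
Qed.

Lemma unitA m (A : 'M[R]_m) g :
  0 <= g -> m%:R * g < 1 -> (forall i j, `|(A - 1%:M) i j| <= g) ->
  A \in unitmx.
Proof.
move=> g0 hmg hB; rewrite -unitmx_tr -row_free_unit -kermx_eq0.
apply/eqP/row_matrixP => i; rewrite row0.
set v := row i _.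
have hv : v *m A^T = 0 by rewrite /v -row_mul mulmx_ker row0.
have : A *m v^T = 0 by rewrite -[A]trmxK -trmx_mul hv trmx0.
move/(kerA g0 hmg hB) => h.
by rewrite -[v]trmxK h trmx0.
Qed.

Lemma eigA m (A : 'M[R]_m) g a :
  0 <= g -> (forall i j, `|(A - 1%:M) i j| <= g) ->
  eigenvalue A a -> `|a - 1| <= m%:R * g.
Proof.
move=> g0 hB /eigenvalueP [v hv vn0].
set x := v^T.
have hx : A^T *m x = a *: x by rewrite /x -trmx_mul hv linearZ.
have hB' := trB hB.
have hc : forall i, `|a - 1| * `|x i 0| <= m%:R * g * norminf x.
  move=> i; have := L0 x i hB'.
  rewrite mulmxBl hx mul1mx !mxE -normrM mulrBl mul1r => h.
  apply: le_trans h _; rewrite -mulrA mulrCA; apply: ler_wpM2l => //.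
  exact: n1_le_inf.
have hpos : 0 < norminf x.
  rewrite lt_def ninf_ge0 andbT; apply/negP => /eqP h0; move/negP: vn0; apply.
  apply/eqP/matrixP => i j; rewrite (ord1 i) !mxE; apply/eqP; rewrite -normr_le0.
  by have := ninf_ge x j; rewrite h0 /x mxE.
case: (eqVneq a 1) => [-> |ha1].
  by rewrite subrr normr0 mulr_ge0.
have hpa : 0 < `|a - 1| by rewrite normr_gt0 subr_eq0.
have : norminf x <= m%:R * g * norminf x / `|a - 1|.
  apply: ninf_le; first by rewrite divr_ge0 // ?mulr_ge0 // ?ninf_ge0 // ltW.
  by move=> i; rewrite ler_pdivlMr // mulrC.
rewrite ler_pdivlMr // => h.
by rewrite -(ler_pM2r hpos) mulrC.
Qed.
End Gen.
Section Spec.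
Variable R : realType.
Variable p : nat.
Variable Sigma : 'M[R]_p.

Lemma gamma_ge0 : 0 <= gamma Sigma.
Proof.
rewrite /gamma; elim/big_ind: _ => // [a b ha hb|j _]; first by rewrite le_max ha.
elim/big_ind: _ => // a b ha hb; by rewrite le_max ha.
Qed.

Lemma gamma_off j j' : j != j' -> `|Sigma j j'| <= gamma Sigma.
Proof.
move=> h; apply: le_trans (le_bigmax _ _ j).
exact: (le_bigmax_cond _ (P := fun j' => j != j') (fun j' => `|Sigma j j'|) h).
Qed.

Lemma subm_B (T : {set 'I_p}) : (forall j, Sigma j j = 1) ->
  forall i j, `|(subm Sigma T T - 1%:M) i j| <= gamma Sigma.
Proof.
move=> hd i j; rewrite !mxE; case: (eqVneq i j) => [->|hij].
  by rewrite hd subrr normr0 gamma_ge0.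
rewrite subr0; apply: gamma_off; apply: contra hij => /eqP h.
by apply/eqP; apply: enum_val_inj.
Qed.

Lemma subm_dis (T U : {set 'I_p}) : (forall x, x \in T -> x \notin U) ->
  forall i j, `|subm Sigma T U i j| <= gamma Sigma.
Proof.
move=> hd i j; rewrite !mxE; apply: gamma_off; apply/eqP => h.
by have := hd _ (enum_valP i); rewrite h enum_valP.
Qed.

Lemma subcol_b (T : {set 'I_p}) j : j \notin T ->
  forall i, `|subcol Sigma T j i 0| <= gamma Sigma.
Proof.
move=> hj i; rewrite !mxE; apply: gamma_off; apply/eqP => h.
by have := enum_valP i; rewrite h (negbTE hj).
Qed.

Lemma Sigma_B : (forall j, Sigma j j = 1) ->
  forall i j, `|(Sigma - 1%:M) i j| <= gamma Sigma.
Proof.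
move=> hd i j; rewrite !mxE; case: (eqVneq i j) => [->|hij].
  by rewrite hd subrr normr0 gamma_ge0.
by rewrite subr0; apply: gamma_off.
Qed.
End Spec.
Unset Implicit Arguments. Set Strict Implicit.

Theorem lemma1 (R : realType) (p n kbar : nat) (Sigma : 'M[R]_p) (beta : 'cV[R]_p)
  (sigma nu omega0 eta : R) :
  posdef Sigma ->
  (forall j, Sigma j j = 1) ->
  0 < sigma -> 0 <= nu -> (1 <= n)%N ->
  let mu := mu_n R p n in
  let S := [set j : 'I_p | sigma * nu * mu < `|beta j 0|] in
  let Sc := ~: S in
  let k := #|S| in
  (1 <= kbar)%N -> (k <= kbar)%N ->
  0 <= omega0 -> omega0 < 1 ->
  gamma Sigma <= omega0 / (2 * kbar%:R) ->
  0 <= eta ->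
  norm1 (subv beta Sc) <= sigma * eta * mu ->
  let etabar := eta / kbar%:R in
  ((1 <= k)%N ->
     (forall T : {set 'I_p}, #|T| = k ->
        lambda_min_ge (subm Sigma T T) (1 - omega0 / 2) /\
        lambda_max_le (subm Sigma T T) (1 + omega0 / 2)) /\
     (forall T : {set 'I_p}, #|T| = k ->
        forall j, j \notin T ->
          norm1 (invmx (subm Sigma T T) *m subcol Sigma T j) <= omega0) /\
     norminf (invmx (subm Sigma S S) *m subm Sigma S Sc *m subv beta Sc)
       <= sigma * omega0 * etabar * mu /\
     norminf ((subm Sigma Sc Sc
               - subm Sigma Sc S *m invmx (subm Sigma S S) *m subm Sigma S Sc)
              *m subv beta Sc)
       <= sigma * (nu + omega0 * etabar) * mu) /\
  (k = 0%N -> norminf (Sigma *m beta) <= sigma * (nu + omega0 * etabar) * mu).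
Proof.
move=> _ hd hs hnu hn mu S Sc k hk1 hkk ho0 ho1 hg heta hb etabar.
set g := gamma Sigma.
set K : R := kbar%:R.
have g0 : 0 <= g := gamma_ge0 Sigma.
have hK1 : 1 <= K by rewrite /K ler1n.
have hK0 : 0 < K by apply: lt_le_trans hK1.
have hgK : 2 * K * g <= omega0.
  by move: hg; rewrite ler_pdivlMr ?mulr_gt0 // mulrC.
have hkK : k%:R <= K by rewrite /K ler_nat.
have hkg : k%:R * g <= omega0 / 2.
  rewrite ler_pdivlMr //; have := ler_wpM2r g0 hkK; nra.
have hmu : 0 <= mu by rewrite /mu /mu_n sqrtr_ge0.
set Z := sigma * eta * mu.
have hZ : 0 <= Z by rewrite /Z !mulr_ge0 // ltW.
have hQ : sigma * omega0 * etabar * mu = omega0 * Z / K.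
  by rewrite /etabar /Z; field; rewrite gt_eqF.
have hQ2 : sigma * (nu + omega0 * etabar) * mu = sigma * nu * mu + omega0 * Z / K.
  by rewrite /etabar /Z; field; rewrite gt_eqF.
have hgZ : g * Z <= omega0 * Z / K / 2.
  rewrite ler_pdivlMr // ler_pdivlMr //.
  have := ler_wpM2r hZ hgK; nra.
have hbSc : forall i, `|subv beta Sc i 0| <= sigma * nu * mu.
  move=> i; rewrite mxE; have := enum_valP i; rewrite /Sc in_setC inE.
  by rewrite -leNgt.
have mxD_entry : forall m (u v : 'cV[R]_m) i, (u + v) i 0 = u i 0 + v i 0.
  by move=> m u v i; rewrite !mxE.
have split1 : forall m (A : 'M[R]_m) (x : 'cV[R]_m), A *m x = x + (A - 1%:M) *m x.
  by move=> m A x; rewrite mulmxBl mul1mx addrC subrK.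
rewrite hQ hQ2; set Q := omega0 * Z / K.
have hQ0 : 0 <= Q by rewrite /Q divr_ge0 // ?mulr_ge0 // ltW.
have hsnm : 0 <= sigma * nu * mu by rewrite !mulr_ge0 // ltW.
have hkg1 : k%:R * g < 1 by lra.
have hB := subm_B (T:=S) hd.
have hu : subm Sigma S S \in unitmx by apply: (unitA g0 hkg1 hB).
set x := invmx (subm Sigma S S) *m (subm Sigma S Sc *m subv beta Sc).
have hc1 : norminf x <= Q.
  have hy : norminf (subm Sigma S Sc *m subv beta Sc) <= g * Z.
    apply: ninf_le; first by rewrite mulr_ge0.
    have hD : forall i j, `|subm Sigma S Sc i j| <= g.
      by apply: subm_dis => y hy; rewrite /Sc in_setC negbK.
    move=> i; apply: le_trans (L0 (subv beta Sc) i hD) _.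
    by apply: ler_wpM2l.
  have hAx : subm Sigma S S *m x = subm Sigma S Sc *m subv beta Sc.
    by rewrite /x mulmxA mulmxV // mul1mx.
  have := LBinf x g0 hB; rewrite hAx => h.
  have hgZ' : g * Z <= Q / 2 := hgZ.
  have hp : k%:R * g * norminf x <= 1 / 2 * norminf x.
    by apply: ler_wpM2r; [exact: ninf_ge0 | lra].
  lra.
split.
  move=> _; split.
    move=> T hT; have hBT := subm_B (T:=T) hd.
    split => a /(eigA g0 hBT); rewrite hT => h; have := le_trans h hkg;
      rewrite ler_norml => /andP [h1 h2]; lra.
  split.
    move=> T hT j hj; have hBT := subm_B (T:=T) hd.
    have huT : subm Sigma T T \in unitmx.
      by apply: (unitA g0 _ hBT); rewrite hT.
    set y := invmx (subm Sigma T T) *m subcol Sigma T j.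
    have hAy : subm Sigma T T *m y = subcol Sigma T j.
      by rewrite /y mulmxA mulmxV // mul1mx.
    have hkgT : #|T|%:R * gamma Sigma = k%:R * g by rewrite hT.
    have := LB1 y hBT; rewrite hAy hkgT => h.
    have hc : norm1 (subcol Sigma T j) <= k%:R * g.
      apply: (@le_trans _ _ (\sum_(i < #|T|) g)).
        by apply: ler_sum => i _; apply: subcol_b.
      by rewrite sumr_const card_ord hT mulr_natl.
    have hp : k%:R * g * norm1 y <= omega0 / 2 * norm1 y.
      by apply: ler_wpM2r; [exact: n1_ge0 | lra].
    have := n1_ge0 y; nra.
  split; first by rewrite -mulmxA.
  have -> : (subm Sigma Sc Sc - subm Sigma Sc S *m invmx (subm Sigma S S) *m
      subm Sigma S Sc) *m subv beta Sc =
      subm Sigma Sc Sc *m subv beta Sc - subm Sigma Sc S *m x.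
    by rewrite /x mulmxBl -!mulmxA.
  have hC := subm_B (T:=Sc) hd.
  have hE : forall i j, `|subm Sigma Sc S i j| <= g.
    by apply: subm_dis => y; rewrite /Sc in_setC.
  apply: ninf_le; first lra.
  move=> i; rewrite mxB_entry (split1 _ (subm Sigma Sc Sc)) mxD_entry.
  have h1 := L0 (subv beta Sc) i hC.
  have h1' : gamma Sigma * norm1 (subv beta Sc) <= g * Z by apply: ler_wpM2l.
  have h2 := L0 x i hE.
  have h3 : g * norm1 x <= k%:R * g * norminf x.
    rewrite -mulrA mulrCA; apply: ler_wpM2l => //; exact: n1_le_inf.
  have hp : k%:R * g * norminf x <= 1 / 2 * norminf x.
    by apply: ler_wpM2r; [exact: ninf_ge0 | lra].
  have hbi := hbSc i.
  have hgZ' : g * Z <= Q / 2 := hgZ.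
  have hnB := ler_normB (subv beta Sc i 0 + ((subm Sigma Sc Sc - 1%:M) *m subv beta Sc) i 0)
    ((subm Sigma Sc S *m x) i 0).
  have hn2 := ler_normD (subv beta Sc i 0) (((subm Sigma Sc Sc - 1%:M) *m subv beta Sc) i 0).
  lra.
move=> hk0.
have S0 : S = set0 := cards0_eq hk0.
have hball : forall j, `|beta j 0| <= sigma * nu * mu.
  move=> j; have : j \notin S by rewrite S0 in_set0.
  by rewrite inE -leNgt.
have hn1 : norm1 beta = norm1 (subv beta Sc).
  rewrite /norm1 /subv; under [RHS]eq_bigr do rewrite mxE.
  rewrite -(big_enum_val (A := mem Sc) (fun x => `|beta x 0|)) /=.
  by apply: eq_bigl => y; rewrite /Sc S0 setC0 !inE.
apply: ninf_le; first lra.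
move=> i; rewrite split1 mxD_entry.
have h1 := L0 beta i (Sigma_B hd).
have h1' : gamma Sigma * norm1 beta <= g * Z by rewrite hn1; apply: ler_wpM2l.
have hgZ' : g * Z <= Q / 2 := hgZ.
have hn2 := ler_normD (beta i 0) (((Sigma - 1%:M) *m beta) i 0).
have := hball i; lra.
Qed.
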